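(* Let $\mathcal X\subseteq\mathbb R^m$ be nonempty, convex and compact with diameter $D>0$, $F:\mathbb R^m\to\mathbb R^r$ affine, $C\in\mathbb R^{r\times n}$ with nonzero columns, $\Theta(x,y)=\frac12\|F(x)-Cy\|^2$, and $L>0$ such that for every $y\in\{0,1\}^n$, $\Theta(\cdot,y)$ is $L$-Lipschitz on $\mathcal X$ and $\|\nabla_x\Theta(x,y)\|\le L$ on $\mathcal X$. Given $\epsilon>0$ set $K=\lceil 9((D^2+L^2)/(2\epsilon))^2\rceil$, choose $x_0\in\mathcal X$, and for $k=0,\dots,K-1$ let $y_k=\operatorname{DG}(\Theta(x_k,\cdot))$, $x_{k+1}=\operatorname{Proj}_{\mathcal X}(x_k-K^{-1/2}\nabla_x\Theta(x_k,y_k))$; output $\hat x=\frac1K\sum_{k=0}^{K-1}x_k$ and $\hat y=\operatorname{DG}(\Theta(\hat x,\cdot))$. If $C$ is obtuse, $(\hat x,\hat y)$ is a $(\frac13,\epsilon)$-approximate minimax point of $\min_{x\in\mathcal X}\max_{y\in\{0,1\}^n}\Theta(x,y)$. If the columns of $C$ are mutually orthogonal, $(\hat x,\hat y)$ is an $\epsilon$-global minimax point of that problem.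
   Context: $C=(c_1,\dots,c_n)$ is obtuse if $c_i^\top c_j\le0$ for all $i\neq j$. $\operatorname{Proj}_{\mathcal X}$ is Euclidean projection. $\operatorname{DG}(\Theta(x,\cdot))$ is the double greedy procedure: $\underline y^0=\mathbf 0$, $\overline y^0=\mathbf 1$; for $k=1,\dots,n$, with $a=\Theta(x,\underline y^{k-1}+\mathbf e_k)-\Theta(x,\underline y^{k-1})$ and $b=\Theta(x,\overline y^{k-1}-\mathbf e_k)-\Theta(x,\overline y^{k-1})$, if $a\ge b$ set $\underline y^k=\underline y^{k-1}+\mathbf e_k,\ \overline y^k=\overline y^{k-1}$, else $\underline y^k=\underline y^{k-1},\ \overline y^k=\overline y^{k-1}-\mathbf e_k$; return $\underline y^n(=\overline y^n)$. With $\mathcal Y=\{0,1\}^n$, $(x^*,y^* )\in\mathcal X\times\mathcal Y$ is an $(\alpha,\epsilon)$-approximate minimax point if $\alpha\max_{y\in\mathcal Y}\Theta(x^*,y)\le\Theta(x^*,y^* )\le\frac1\alpha\min_{x\in\mathcal X}\max_{y\in\mathcal Y}\Theta(x,y)+\epsilon$; an $\epsilon$-global minimax point is an $(1,\epsilon)$-approximate minimax point. *)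

(* Defs.v *)
From HB Require Import structures.
From mathcomp Require Import all_boot all_order all_algebra.
From mathcomp Require Import all_classical all_reals all_analysis.
Set Implicit Arguments. Unset Strict Implicit. Unset Printing Implicit Defensive.
Import Order.TTheory GRing.Theory Num.Theory.
Import numFieldNormedType.Exports.
Local Open Scope classical_set_scope.
Local Open Scope ring_scope.

Section Defs.
Variable R : realType.

Definition enorm k (v : 'cV[R]_k) : R := Num.sqrt (\sum_i (v i 0) ^+ 2).

Definition bvec n := {ffun 'I_n -> bool}.
Definition rvec n (y : bvec n) : 'cV[R]_n := \col_i ((y i)%:R).

Definition Theta m r n (F : 'cV[R]_m -> 'cV[R]_r) (C : 'M[R]_(r, n))
  (x : 'cV[R]_m) (y : bvec n) : R :=
  2^-1 * (enorm (F x - C *m rvec y)) ^+ 2.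

Definition affine m r (F : 'cV[R]_m -> 'cV[R]_r) :=
  exists (A : 'M[R]_(r, m)) (b : 'cV[R]_r), forall x, F x = A *m x + b.

Definition diam m (X : set 'cV[R]_m) : R :=
  sup [set d | exists x y, X x /\ X y /\ d = enorm (x - y)].

Definition grad m (f : 'cV[R]_m -> R) (x : 'cV[R]_m) : 'cV[R]_m :=
  \col_i ('D_(delta_mx i 0) f x).

Definition proj m (X : set 'cV[R]_m) (z : 'cV[R]_m) : 'cV[R]_m :=
  xget 0 [set p | X p /\ forall q, X q -> enorm (z - p) <= enorm (z - q)].

Definition coldot r n (C : 'M[R]_(r, n)) (i j : 'I_n) : R :=
  \sum_k C k i * C k j.
Definition obtuse r n (C : 'M[R]_(r, n)) :=
  forall i j : 'I_n, i != j -> coldot C i j <= 0.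
Definition orthogonal_cols r n (C : 'M[R]_(r, n)) :=
  forall i j : 'I_n, i != j -> coldot C i j = 0.
Definition nonzero_cols r n (C : 'M[R]_(r, n)) :=
  forall i : 'I_n, col i C != 0.

Definition setb n (v : bvec n) (k : 'I_n) (b : bool) : bvec n :=
  [ffun i => if i == k then b else v i].
Definition dg_step n (g : bvec n -> R) (p : bvec n * bvec n) (k : 'I_n) :=
  let: (lo, hi) := p in
  let a := g (setb lo k true) - g lo in
  let b := g (setb hi k false) - g hi in
  if b <= a then (setb lo k true, hi) else (lo, setb hi k false).
Definition DG n (g : bvec n -> R) : bvec n :=
  (foldl (dg_step g) ([ffun=> false], [ffun=> true]) (enum 'I_n)).1.

Definition maxY m n (Th : 'cV[R]_m -> bvec n -> R) (x : 'cV[R]_m) : R :=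
  sup [set Th x y | y in [set: bvec n]].
Definition minmax m n (X : set 'cV[R]_m) (Th : 'cV[R]_m -> bvec n -> R) : R :=
  inf [set maxY Th x | x in X].

Definition approx_minimax m n (X : set 'cV[R]_m) (Th : 'cV[R]_m -> bvec n -> R)
  (alpha eps : R) (xs : 'cV[R]_m) (ys : bvec n) :=
  X xs /\ alpha * maxY Th xs <= Th xs ys /\
  Th xs ys <= alpha^-1 * minmax X Th + eps.

Definition global_minimax m n (X : set 'cV[R]_m) (Th : 'cV[R]_m -> bvec n -> R)
  (eps : R) xs ys := approx_minimax X Th 1 eps xs ys.

Definition nb_iter (D L eps : R) : nat :=
  `| Num.ceil (9 * ((D ^+ 2 + L ^+ 2) / (2 * eps)) ^+ 2) |%N.

Fixpoint iterate m n (X : set 'cV[R]_m) (Th : 'cV[R]_m -> bvec n -> R)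
  (step : R) (x0 : 'cV[R]_m) (k : nat) : 'cV[R]_m :=
  match k with
  | 0 => x0
  | k'.+1 => let xk := iterate X Th step x0 k' in
             let yk := DG (Th xk) in
             proj X (xk - step *: grad (fun x => Th x yk) xk)
  end.

Definition xhat m n (X : set 'cV[R]_m) (Th : 'cV[R]_m -> bvec n -> R)
  (K : nat) (x0 : 'cV[R]_m) : 'cV[R]_m :=
  (K%:R)^-1 *: \sum_(k < K) iterate X Th (Num.sqrt (K%:R))^-1 x0 k.

Definition yhat m n (X : set 'cV[R]_m) (Th : 'cV[R]_m -> bvec n -> R)
  (K : nat) (x0 : 'cV[R]_m) : bvec n := DG (Th (xhat X Th K x0)).

End Defs.

(* Main.v *)
Require Import Defs.
From HB Require Import structures.
From mathcomp Require Import all_boot all_order all_algebra.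
From mathcomp Require Import all_classical all_reals all_analysis.
From mathcomp Require Import ring lra.
Set Implicit Arguments. Unset Strict Implicit. Unset Printing Implicit Defensive.
Import Order.TTheory GRing.Theory Num.Theory.
Import numFieldNormedType.Exports.
Local Open Scope classical_set_scope.
Local Open Scope ring_scope.
Local Open Scope convex_scope.

Section Alg.
Variable R : realType.

Definition dotv k (a b : 'cV[R]_k) : R := \sum_i a i 0 * b i 0.
Definition sqn k (a : 'cV[R]_k) : R := dotv a a.

Lemma sqn_ge0 k (a : 'cV[R]_k) : 0 <= sqn a.
Proof. by apply: sumr_ge0 => i _; rewrite -expr2 sqr_ge0. Qed.

Lemma enorm_sq k (v : 'cV[R]_k) : enorm v ^+ 2 = sqn v.
Proof.
rewrite /enorm sqr_sqrtr; last by apply: sumr_ge0 => i _; rewrite sqr_ge0.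
by apply: eq_bigr => i _; rewrite expr2.
Qed.

Lemma enorm_ge0 k (v : 'cV[R]_k) : 0 <= enorm v.
Proof. exact: sqrtr_ge0. Qed.

Lemma enorm_le k (u v : 'cV[R]_k) : (enorm u <= enorm v) = (sqn u <= sqn v).
Proof.
by rewrite -!enorm_sq ler_sqr // ?nnegrE enorm_ge0.
Qed.

Lemma dotvC k (a b : 'cV[R]_k) : dotv a b = dotv b a.
Proof. by apply: eq_bigr => i _; rewrite mulrC. Qed.

Lemma dotvDl k (a b c : 'cV[R]_k) : dotv (a + b) c = dotv a c + dotv b c.
Proof. by rewrite /dotv -big_split; apply: eq_bigr => i _; rewrite mxE mulrDl. Qed.

Lemma dotvDr k (a b c : 'cV[R]_k) : dotv c (a + b) = dotv c a + dotv c b.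
Proof. by rewrite dotvC dotvDl !(dotvC c). Qed.

Lemma dotvZl k (t : R) (a b : 'cV[R]_k) : dotv (t *: a) b = t * dotv a b.
Proof. by rewrite /dotv mulr_sumr; apply: eq_bigr => i _; rewrite mxE mulrA. Qed.

Lemma dotvZr k (t : R) (a b : 'cV[R]_k) : dotv b (t *: a) = t * dotv b a.
Proof. by rewrite dotvC dotvZl dotvC. Qed.

Lemma dotvNl k (a b : 'cV[R]_k) : dotv (- a) b = - dotv a b.
Proof. by rewrite -scaleN1r dotvZl mulN1r. Qed.

Lemma dotvNr k (a b : 'cV[R]_k) : dotv b (- a) = - dotv b a.
Proof. by rewrite dotvC dotvNl dotvC. Qed.

Lemma dotvBl k (a b c : 'cV[R]_k) : dotv (a - b) c = dotv a c - dotv b c.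
Proof. by rewrite dotvDl dotvNl. Qed.

Lemma dotvBr k (a b c : 'cV[R]_k) : dotv c (a - b) = dotv c a - dotv c b.
Proof. by rewrite dotvDr dotvNr. Qed.

Lemma dotv0r k (a : 'cV[R]_k) : dotv a 0 = 0.
Proof. by rewrite /dotv big1 // => i _; rewrite mxE mulr0. Qed.

Lemma sqnD k (a b : 'cV[R]_k) : sqn (a + b) = sqn a + 2 * dotv a b + sqn b.
Proof. rewrite /sqn dotvDl !dotvDr (dotvC b a); ring. Qed.

Lemma sqnB k (a b : 'cV[R]_k) : sqn (a - b) = sqn a - 2 * dotv a b + sqn b.
Proof. rewrite /sqn dotvBl !dotvBr (dotvC b a); ring. Qed.

Lemma sqnZ k (t : R) (a : 'cV[R]_k) : sqn (t *: a) = t ^+ 2 * sqn a.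
Proof. rewrite /sqn dotvZl dotvZr; ring. Qed.

Lemma dotv_mx p k (A : 'M[R]_(p, k)) (x : 'cV[R]_k) (w : 'cV[R]_p) :
  dotv (A *m x) w = dotv x (A^T *m w).
Proof.
rewrite /dotv.
under eq_bigr do rewrite mxE big_distrl /=.
rewrite exchange_big /=; apply: eq_bigr => j _.
rewrite mxE big_distrr /=; apply: eq_bigr => i _; rewrite mxE; ring.
Qed.

Lemma dotv_sumr k N (a : 'cV[R]_k) (v : 'I_N -> 'cV[R]_k) :
  dotv a (\sum_(j < N) v j) = \sum_(j < N) dotv a (v j).
Proof.
rewrite /dotv exchange_big /=; apply: eq_bigr => i _.
by rewrite summxE big_distrr.
Qed.

Lemma dotv_delta k (a : 'cV[R]_k) i : dotv a (delta_mx i 0) = a i 0.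
Proof.
rewrite /dotv (bigD1 i) //= big1 ?addr0.
  by rewrite mxE !eqxx mulr1.
by move=> j /negbTE ji; rewrite mxE ji mulr0.
Qed.

End Alg.

Lemma derive_quad (R : realType) m (f : 'cV[R]_m -> R) (a v : 'cV[R]_m) (c d : R) :
  (forall h, f (h *: v + a) = f a + h * c + h ^+ 2 * d) -> 'D_v f a = c.
Proof.
move=> hf; rewrite /derive.
apply: cvg_lim => //.
have E : {near (0:R)^', (fun h : R => c + h * d) =1
    (fun h => h^-1 *: ((f \o shift a) (h *: v) - f a))}.
  near=> h => /=.
  have h0 : h != 0 by near: h; exact: nbhs_dnbhs_neq.
  rewrite /shift hf /=. rewrite [in RHS]/GRing.scale /=. field. done.
apply: cvg_trans; first exact: (near_eq_cvg E).
suff H : (fun h : R => c + h * d) @ 0^' --> c + 0 * d by rewrite mul0r addr0 in H.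
apply: (@cvg_within_filter _ _ _ (nbhs (0:R))).
apply: cvgD; first exact: cvg_cst.
apply: cvgMl. exact: cvg_id.
Unshelve. all: by end_near.
Qed.

Section Th.
Variables (R : realType) (m r n : nat) (F : 'cV[R]_m -> 'cV[R]_r) (C : 'M[R]_(r, n))
  (A : 'M[R]_(r, m)) (b : 'cV[R]_r).
Hypothesis hF : forall x, F x = A *m x + b.

Lemma Theta_sqn x y : Theta F C x y = 2^-1 * sqn (F x - C *m @rvec R n y).
Proof. by rewrite /Theta enorm_sq. Qed.

Lemma Theta_ge0 x y : 0 <= Theta F C x y.
Proof. by rewrite Theta_sqn mulr_ge0 ?sqn_ge0 // invr_ge0. Qed.

Definition gradT x y := A^T *m (F x - C *m @rvec R n y).

Lemma Fshift x x' y : F x' - C *m @rvec R n y = (F x - C *m @rvec R n y) + A *m (x' - x).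
Proof. by rewrite !hF mulmxBr [RHS]addrC !addrA subrK. Qed.

Lemma Theta_expand x x' y : Theta F C x' y =
  Theta F C x y + dotv (gradT x y) (x' - x) + 2^-1 * sqn (A *m (x' - x)).
Proof.
rewrite !Theta_sqn (Fshift x x') sqnD /gradT dotvC dotv_mx dotvC.
by rewrite !mulrDr mulrA mulVf ?pnatr_eq0 // mul1r.
Qed.

Lemma first_order x x' y : Theta F C x y + dotv (gradT x y) (x' - x) <= Theta F C x' y.
Proof.
by rewrite (Theta_expand x x') lerDl mulr_ge0 ?sqn_ge0 // invr_ge0.
Qed.

Lemma grad_eq x y : grad (fun z => Theta F C z y) x = gradT x y.
Proof.
apply/matrixP => i j; rewrite ord1 mxE.
apply: derive_quad => h.
rewrite (Theta_expand x (h *: delta_mx i 0 + x)) addrK dotvZr dotv_delta.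
by rewrite -scalemxAr sqnZ [2^-1 * _]mulrCA.
Qed.
End Th.

Section Proj.
Variables (R : realType) (m : nat) (X : set 'cV[R]_m).

Lemma sqn_cont (z : 'cV[R]_m) : continuous (fun q : 'cV[R]_m => sqn (z - q)).
Proof.
have -> : (fun q : 'cV[R]_m => sqn (z - q)) =
   (fun q => \sum_(i < m) ((z i 0 - q i 0) * (z i 0 - q i 0))).
  by apply/funext => q; apply: eq_bigr => i _; rewrite !mxE.
apply: continuous_big; first exact: add_continuous.
move=> i _ q.
have h1 : continuous (fun x : 'cV[R]_m => z i 0 - x i 0).
  move=> x; exact: (cvgB (cvg_cst (z i 0)) (@coord_continuous R m 1 i 0 x)).
exact: (continuousM (h1 q) (h1 q)).
Qed.

Hypotheses (X0 : X !=set0) (cX : compact X).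

Lemma proj_spec (z : 'cV[R]_m) : X (Defs.proj X z) /\
  forall q, X q -> enorm (z - Defs.proj X z) <= enorm (z - q).
Proof.
apply: (@xgetPex _ 0 [set p | X p /\ forall q, X q -> enorm (z - p) <= enorm (z - q)]).
have [c cX' hc] := compact_EVT_min X0 cX (continuous_subspaceT (@sqn_cont z)).
exists c; split; first by rewrite inE in cX'.
by move=> q Xq; rewrite enorm_le; apply: hc; rewrite inE.
Qed.

Hypothesis cvX : convex_set X.

Lemma proj_var (z p q : 'cV[R]_m) : X p -> (forall q, X q -> enorm (z - p) <= enorm (z - q)) ->
  X q -> dotv (z - p) (q - p) <= 0.
Proof.
move=> Xp hp Xq.
set d := dotv (z - p) (q - p); set S := sqn (q - p).
have S0 : 0 <= S by exact: sqn_ge0.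
have key : forall t : R, 0 <= t -> t <= 1 -> 2 * t * d <= t ^+ 2 * S.
  move=> t t0 t1.
  have Xt : X (t *: q + (1 - t) *: p).
    by have := cvX (Itv01 t0 t1) (mem_set Xq) (mem_set Xp); rewrite inE.
  have := hp _ Xt; rewrite enorm_le.
  have -> : z - (t *: q + (1 - t) *: p) = (z - p) - t *: (q - p).
    by apply/matrixP => i j; rewrite !mxE; ring.
  by rewrite (sqnB (z - p)) dotvZr sqnZ -/d -/S; nra.
rewrite leNgt; apply/negP => d0.
pose t := d / (S + d + 1).
have den0 : 0 < S + d + 1 by lra.
have t0 : 0 <= t by rewrite divr_ge0 // ?ltW.
have t1 : t <= 1 by rewrite ler_pdivrMr // mul1r; lra.
have := key t t0 t1.
have tS : t * S < d.
  by rewrite /t mulrAC ltr_pdivrMr // mulrDr; nra.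
have tp : 0 < t by rewrite divr_gt0.
nra.
Qed.
Lemma proj_nonexp (z x : 'cV[R]_m) : X x -> sqn (Defs.proj X z - x) <= sqn (z - x).
Proof.
move=> Xx; have [Xp hp] := proj_spec z.
set p := Defs.proj X z in Xp hp *.
have v := proj_var Xp hp Xx.
have E : z - x = (z - p) + (p - x) by rewrite addrA subrK.
rewrite E (sqnD (z - p)) -[X in dotv _ X](opprB x p) dotvNr.
have := sqn_ge0 (z - p); nra.
Qed.
End Proj.

Section DGsec.
Variables (R : realType) (n : nat) (g : bvec n -> R).

Definition bsub (S T : bvec n) := forall j, S j -> T j.
Definition submod (g : bvec n -> R) := forall S T k, bsub S T -> T k = false ->
  g (setb T k true) - g T <= g (setb S k true) - g S.
Definition Ofun (O lo hi : bvec n) : bvec n := [ffun j => (O j || lo j) && hi j].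

Lemma setbE (v : bvec n) k b j : setb v k b j = if j == k then b else v j.
Proof. by rewrite /setb ffunE. Qed.

Lemma setb_id (v : bvec n) k b : v k = b -> setb v k b = v.
Proof. by move=> vk; apply/ffunP => j; rewrite setbE; case: eqP => // ->. Qed.

Lemma setbK (v : bvec n) k b b' : v k = b' -> setb (setb v k b) k b' = v.
Proof. by move=> vk; apply/ffunP => j; rewrite !setbE; case: eqP => // ->. Qed.

Lemma OfunE (O lo hi : bvec n) j : Ofun O lo hi j = (O j || lo j) && hi j.
Proof. by rewrite ffunE. Qed.

Lemma Ofun_lo (O lo hi : bvec n) k : hi k = true ->
  Ofun O (setb lo k true) hi = setb (Ofun O lo hi) k true.
Proof.
move=> hk; apply/ffunP => j; rewrite OfunE !setbE OfunE.
by case: eqP => [->|_]; rewrite ?hk ?orbT.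
Qed.

Lemma Ofun_hi (O lo hi : bvec n) k :
  Ofun O lo (setb hi k false) = setb (Ofun O lo hi) k false.
Proof.
apply/ffunP => j; rewrite OfunE !setbE OfunE.
by case: eqP => [->|_]; rewrite ?andbF.
Qed.

Lemma Ofun_same (O v : bvec n) : Ofun O v v = v.
Proof. by apply/ffunP => j; rewrite OfunE; case: (v j); rewrite ?orbT ?andbF. Qed.

Lemma Ofun_init (O : bvec n) : Ofun O [ffun=> false] [ffun=> true] = O.
Proof. by apply/ffunP => j; rewrite OfunE !ffunE orbF andbT. Qed.

Section Step.
Variables (O lo hi : bvec n) (k : 'I_n).
Hypotheses (lohi : bsub lo hi) (lok : lo k = false) (hik : hi k = true).
Let a := g (setb lo k true) - g lo.
Let b := g (setb hi k false) - g hi.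
Let O' := Ofun O lo hi.

Lemma sub_lo_hik : bsub lo (setb hi k false).
Proof. by move=> j lj; rewrite setbE; case: eqP => [ej|_]; [rewrite ej lok in lj|exact: lohi]. Qed.

Lemma ab_ge0 : submod g -> 0 <= a + b.
Proof.
move=> sg; have := sg _ _ k sub_lo_hik; rewrite {1}setbE eqxx => /(_ erefl); rewrite ?setbK //.
rewrite /a /b; lra.
Qed.

Lemma ab_le0 : submod (fun y => - g y) -> a + b <= 0.
Proof.
move=> sg; have := sg _ _ k sub_lo_hik; rewrite {1}setbE eqxx => /(_ erefl); rewrite ?setbK //.
rewrite /a /b; lra.
Qed.

Lemma sub_O'_hik : O' k = false -> bsub O' (setb hi k false).
Proof.
move=> Ok j; rewrite setbE; case: eqP => [->|_]; first by rewrite Ok.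
by rewrite /O' OfunE => /andP[].
Qed.

Lemma sub_lo_O' : bsub lo O'.
Proof. by move=> j lj; rewrite OfunE lj orbT lohi. Qed.

Lemma sub_lo_O'k : bsub lo (setb O' k false).
Proof.
move=> j lj; rewrite setbE; case: eqP => [ej|_]; first by rewrite ej lok in lj.
exact: sub_lo_O'.
Qed.

Lemma step_ineq1 : submod g ->
  let p := dg_step g (lo, hi) k in
  g O' - g (Ofun O p.1 p.2) <= (g p.1 - g lo) + (g p.2 - g hi).
Proof.
move=> sg /=; have ab := ab_ge0 sg; rewrite /dg_step /=.
case: ifP => ba /=; move: ba; rewrite -/a -/b => ba.
- rewrite Ofun_lo // -/O' subrr addr0 -/a.
  case Ok: (O' k); first by rewrite (setb_id Ok) subrr; lra.
  have := sg _ _ k (sub_O'_hik Ok); rewrite {1}setbE eqxx => /(_ erefl); rewrite ?setbK //.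
  move: ab ba; rewrite /a /b; lra.
- rewrite Ofun_hi -/O' subrr add0r -/b.
  case Ok: (O' k); last by rewrite (setb_id Ok) subrr; lra.
  have := sg _ _ k sub_lo_O'k; rewrite {1}setbE eqxx => /(_ erefl); rewrite ?setbK //.
  move/negbT: ba; rewrite -ltNge => ba; move: ab ba; rewrite /a /b; lra.
Qed.

Lemma step_ineq0 : submod g -> submod (fun y => - g y) ->
  let p := dg_step g (lo, hi) k in
  g O' - g (Ofun O p.1 p.2) <= 0.
Proof.
move=> sg sg' /=; have ab := ab_ge0 sg; have ab' := ab_le0 sg'.
rewrite /dg_step /=.
case: ifP => ba /=; move: ba; rewrite -/a -/b => ba.
- rewrite Ofun_lo // -/O'.
  case Ok: (O' k); first by rewrite (setb_id Ok) subrr.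
  have := sg' _ _ k sub_lo_O'; rewrite Ok => /(_ erefl).
  move: ab ab' ba; rewrite /a /b; lra.
- rewrite Ofun_hi -/O'.
  case Ok: (O' k); last by rewrite (setb_id Ok) subrr.
  have := sg _ _ k sub_lo_O'k; rewrite {1}setbE eqxx => /(_ erefl); rewrite ?setbK //.
  move/negbT: ba; rewrite -ltNge => ba; move: ab ab' ba; rewrite /a /b; lra.
Qed.

Lemma step_facts : let p := dg_step g (lo, hi) k in
  [/\ bsub p.1 p.2, p.1 k = p.2 k &
      forall j, j != k -> p.1 j = lo j /\ p.2 j = hi j].
Proof.
rewrite /dg_step; case: ifP => _ /=; split.
- by move=> j; rewrite setbE; case: eqP => [->|_] //; exact: lohi.
- by rewrite setbE eqxx.
- by move=> j /negbTE jk; rewrite setbE jk.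
- by move=> j; rewrite setbE; case: eqP => [ej|_]; [rewrite ej lok|exact: lohi].
- by rewrite setbE eqxx.
- by move=> j /negbTE jk; rewrite setbE jk.
Qed.
End Step.


Lemma fold_ind (O : bvec n) (c : R)
  (hstep : forall lo hi k, bsub lo hi -> lo k = false -> hi k = true ->
     g (Ofun O lo hi) - g (Ofun O (dg_step g (lo, hi) k).1 (dg_step g (lo, hi) k).2)
       <= c * ((g (dg_step g (lo, hi) k).1 - g lo) + (g (dg_step g (lo, hi) k).2 - g hi)))
  (s : seq 'I_n) : forall lo hi, uniq s -> bsub lo hi ->
  (forall j, j \in s -> lo j = false /\ hi j = true) ->
  [/\ bsub (foldl (dg_step g) (lo, hi) s).1 (foldl (dg_step g) (lo, hi) s).2,
      (forall j, j \in s -> (foldl (dg_step g) (lo, hi) s).1 j = (foldl (dg_step g) (lo, hi) s).2 j),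
      (forall j, j \notin s -> (foldl (dg_step g) (lo, hi) s).1 j = lo j /\
                               (foldl (dg_step g) (lo, hi) s).2 j = hi j) &
      g (Ofun O lo hi) - g (Ofun O (foldl (dg_step g) (lo, hi) s).1 (foldl (dg_step g) (lo, hi) s).2)
       <= c * ((g (foldl (dg_step g) (lo, hi) s).1 - g lo) + (g (foldl (dg_step g) (lo, hi) s).2 - g hi))].
Proof.
elim: s => [|k s IH] lo hi us lohi hs.
  by split => //; rewrite !subrr addr0 mulr0.
move/andP: us => [ks us].
have [lk hk] := hs k (mem_head _ _).
have [s1 s2 s3] := step_facts lohi lk hk.
have -> : foldl (dg_step g) (lo, hi) (k :: s) = foldl (dg_step g) (dg_step g (lo, hi) k) s by [].
set p1 := dg_step g (lo, hi) k in s1 s2 s3 *.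
have hs' : forall j, j \in s -> p1.1 j = false /\ p1.2 j = true.
  move=> j js; have jk : j != k by apply: contraNneq ks => <-.
  by have [-> ->] := s3 j jk; apply: hs; rewrite in_cons js orbT.
have := IH p1.1 p1.2 us s1 hs'.
rewrite -surjective_pairing.
set q := foldl _ _ _.
case=> t1 t2 t3 t4.
split => //.
- move=> j; rewrite in_cons => /orP [/eqP -> | js]; last exact: t2.
  by have [-> ->] := t3 k ks.
- move=> j; rewrite in_cons negb_or => /andP [jk js].
  by have [-> ->] := t3 j js; exact: s3.
- have := hstep lo hi k lohi lk hk; rewrite -/p1 => h.
  have E : c * (g q.1 - g lo + (g q.2 - g hi)) =
    c * (g q.1 - g p1.1 + (g q.2 - g p1.2)) + c * (g p1.1 - g lo + (g p1.2 - g hi)).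
    by ring.
  rewrite E; lra.
Qed.

Lemma DG_final (O : bvec n) (c : R)
  (hstep : forall lo hi k, bsub lo hi -> lo k = false -> hi k = true ->
     g (Ofun O lo hi) - g (Ofun O (dg_step g (lo, hi) k).1 (dg_step g (lo, hi) k).2)
       <= c * ((g (dg_step g (lo, hi) k).1 - g lo) + (g (dg_step g (lo, hi) k).2 - g hi))) :
  g O - g (DG g) <= c * ((g (DG g) - g [ffun=> false]) + (g (DG g) - g [ffun=> true])).
Proof.
have := @fold_ind O c hstep (enum 'I_n) [ffun=> false] [ffun=> true] (enum_uniq _).
case.
- by move=> j; rewrite ffunE.
- by move=> j _; rewrite !ffunE.
rewrite /DG; set p := foldl _ _ _ => t1 t2 t3 t4.
have e : p.2 = p.1 by apply/ffunP => j; rewrite t2 // mem_enum.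
by move: t4; rewrite e Ofun_same Ofun_init.
Qed.

Lemma DG_third (hg0 : forall y, 0 <= g y) (sg : submod g) (O : bvec n) :
  g O <= 3 * g (DG g).
Proof.
have := @DG_final O 1 (fun lo hi k h1 h2 h3 => ltac:(rewrite mul1r; exact: (step_ineq1 O h1 h2 h3 sg))).
have := hg0 [ffun=> false]; have := hg0 [ffun=> true]; lra.
Qed.

Lemma DG_exact (sg : submod g) (sg' : submod (fun y => - g y)) (O : bvec n) :
  g O <= g (DG g).
Proof.
have := @DG_final O 0 (fun lo hi k h1 h2 h3 => ltac:(rewrite mul0r; exact: (step_ineq0 O h1 h2 h3 sg sg'))).
lra.
Qed.
End DGsec.

Section Sub.
Variables (R : realType) (m r n : nat) (F : 'cV[R]_m -> 'cV[R]_r) (C : 'M[R]_(r, n)).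

Lemma rvec_setb (S : bvec n) k : S k = false ->
  @rvec R n (setb S k true) = @rvec R n S + delta_mx k (0 : 'I_1).
Proof.
move=> Sk; apply/matrixP => i j; rewrite !mxE setbE ord1 eqxx andbT.
by case: eqP => [->|_]; rewrite ?Sk ?addr0 ?add0r.
Qed.

Lemma cd_coldot (k j : 'I_n) : (C^T *m (C *m delta_mx k (0 : 'I_1))) j 0 = coldot C j k.
Proof.
rewrite -(colE k C) mxE; apply: eq_bigr => i _; by rewrite !mxE.
Qed.

Lemma marg (x : 'cV[R]_m) (S : bvec n) k : S k = false ->
  Theta F C x (setb S k true) - Theta F C x S =
  - dotv (F x) (C *m delta_mx k (0 : 'I_1)) + 2^-1 * sqn (C *m delta_mx k (0 : 'I_1))
  + \sum_j (S j)%:R * coldot C j k.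
Proof.
move=> Sk; rewrite !Theta_sqn rvec_setb // mulmxDr.
set w := F x; set a := C *m rvec R S; set ck := C *m delta_mx k (0 : 'I_1).
have -> : w - (a + ck) = (w - a) - ck by rewrite opprD addrA.
rewrite (sqnB (w - a)) dotvBl.
have -> : dotv a ck = \sum_j (S j)%:R * coldot C j k.
  rewrite /a dotv_mx /dotv; apply: eq_bigr => j _; by rewrite mxE cd_coldot.
set t := \sum_j _.
move: (sqn (w - a)) (dotv w ck) (sqn ck) t => p q s0 t0.
by field.
Qed.

Lemma submod_obtuse x : obtuse C -> submod (Theta F C x).
Proof.
move=> ob S T k ST Tk.
have Sk : S k = false by apply/negbTE/negP => /ST; rewrite Tk.
rewrite (@marg x T k Tk) (@marg x S k Sk) lerD2l; apply: ler_sum => j _.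
have [->|jk] := eqVneq j k; first by rewrite Sk Tk !mul0r.
have cj := ob j k jk.
case Sj: (S j); first by rewrite (ST j Sj).
by case: (T j) => /=; rewrite ?mulr1n mulr0n mul0r ?mul1r.
Qed.

Lemma submod_orth x : orthogonal_cols C -> submod (fun y => - Theta F C x y).
Proof.
move=> oc S T k ST Tk.
have Sk : S k = false by apply/negbTE/negP => /ST; rewrite Tk.
have Z : forall V : bvec n, V k = false -> \sum_j (V j)%:R * coldot C j k = 0.
  move=> V Vk; apply: big1 => j _.
  have [->|jk] := eqVneq j k; first by rewrite Vk mulr0n mul0r.
  by rewrite (oc j k jk) mulr0.
have h1 := @marg x T k Tk; have h2 := @marg x S k Sk.
rewrite (Z T Tk) in h1; rewrite (Z S Sk) in h2; lra.
Qed.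
End Sub.

Section Sup.
Variable R : realType.

Lemma maxY_ub m n (Th : 'cV[R]_m -> bvec n -> R) x y : Th x y <= maxY Th x.
Proof.
rewrite /maxY; apply: ub_le_sup; last by exists y.
exists (\sum_(y' : bvec n) `|Th x y'|) => z [y' _ <-].
rewrite (bigD1 y') //= (le_trans (ler_norm _)) // lerDl.
by apply: sumr_ge0 => i _.
Qed.

Lemma maxY_le m n (Th : 'cV[R]_m -> bvec n -> R) x c :
  (forall y, Th x y <= c) -> maxY Th x <= c.
Proof.
move=> h; rewrite /maxY; apply: ge_sup.
  by exists (Th x [ffun=> false]), [ffun=> false].
by move=> z [y _ <-].
Qed.

Lemma minmax_ge m n (X : set 'cV[R]_m) (Th : 'cV[R]_m -> bvec n -> R) c :
  X !=set0 -> (forall x, X x -> c <= maxY Th x) -> c <= minmax X Th.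
Proof.
move=> [x0 Xx0] h; rewrite /minmax; apply: lb_le_inf.
  by exists (maxY Th x0), x0.
by move=> z [x Xx <-]; exact: h.
Qed.

Lemma diam_ub m (X : set 'cV[R]_m) x y : 0 < diam X -> X x -> X y ->
  enorm (x - y) <= diam X.
Proof.
move=> D0 Xx Xy.
set E := [set d | exists x y, X x /\ X y /\ d = enorm (x - y)].
have hs : has_sup E.
  apply: contrapT => hs; move: D0; rewrite /diam -/E sup_out //.
  by rewrite ltxx.
by apply: sup_upper_bound => //; exists x, y.
Qed.

Lemma nb_iter_ge (D L eps : R) : 0 < eps ->
  9 * ((D ^+ 2 + L ^+ 2) / (2 * eps)) ^+ 2 <= (nb_iter D L eps)%:R.
Proof.
move=> e0; rewrite /nb_iter natr_absz ger0_norm; first exact: Num.Theory.ceil_ge.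
rewrite Num.Theory.ceil_ge0 (lt_le_trans (_ : -1 < 0)) ?ltrN10 //.
by rewrite mulr_ge0 // sqr_ge0.
Qed.
End Sup.

Section Desc.
Variables (R : realType) (m r n : nat) (X : set 'cV[R]_m) (F : 'cV[R]_m -> 'cV[R]_r)
  (C : 'M[R]_(r, n)) (A : 'M[R]_(r, m)) (b : 'cV[R]_r) (L eta : R) (x0 : 'cV[R]_m).
Hypotheses (hF : forall x, F x = A *m x + b) (X0 : X !=set0) (cX : compact X)
  (cvX : convex_set X) (Xx0 : X x0) (eta0 : 0 < eta)
  (hgrad : forall (y : bvec n) x, X x -> enorm (grad (fun z => Theta F C z y) x) <= L).

Let xs k := iterate X (Theta F C) eta x0 k.
Let ys k := DG (Theta F C (xs k)).

Lemma iter_in k : X (xs k).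
Proof.
elim: k => [|k IH] //=.
by have [] := proj_spec X0 cX (xs k - eta *: grad (fun x => Theta F C x (ys k)) (xs k)).
Qed.

Lemma descent_step k x : X x ->
  sqn (xs k.+1 - x) <= sqn (xs k - x)
    - 2 * eta * (Theta F C (xs k) (ys k) - Theta F C x (ys k)) + eta ^+ 2 * L ^+ 2.
Proof.
move=> Xx.
have E : xs k.+1 = Defs.proj X (xs k - eta *: gradT F C A (xs k) (ys k)).
  by rewrite /ys /xs /= (grad_eq C hF).
set g := gradT F C A (xs k) (ys k) in E.
have h1 := proj_nonexp X0 cX cvX (xs k - eta *: g) Xx.
rewrite -E in h1.
have E2 : xs k - eta *: g - x = (xs k - x) - eta *: g.
  by apply/matrixP => i j; rewrite !mxE; ring.
rewrite E2 in h1.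
have fo := first_order C hF (xs k) x (ys k); rewrite -/g in fo.
have hg : sqn g <= L ^+ 2.
  have := hgrad (ys k) (iter_in k); rewrite (grad_eq C hF) -/g => hL.
  rewrite -enorm_sq; have := enorm_ge0 g; nra.
move: h1; rewrite (sqnB (xs k - x)) dotvZr sqnZ.
have -> : dotv (xs k - x) g = - dotv g (x - xs k).
  by rewrite dotvC -dotvNr opprB.
move: fo hg; set d := dotv g (x - xs k).
set T1 := Theta F C (xs k) (ys k); set T2 := Theta F C x (ys k).
have := sqn_ge0 g; have e2 : 0 <= eta ^+ 2 by rewrite sqr_ge0.
move=> g0 fo hg h1; clear E E2.
have p1 : 0 <= eta * (T2 - T1 - d).
  by apply: mulr_ge0; [exact: ltW | rewrite -addrA -opprD subr_ge0].
have p2 : 0 <= eta ^+ 2 * (L ^+ 2 - sqn g) by apply: mulr_ge0 => //; rewrite subr_ge0.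
nra.
Qed.

Lemma descent K x : X x ->
  2 * eta * \sum_(k < K) (Theta F C (xs k) (ys k) - Theta F C x (ys k))
   + sqn (xs K - x) <= sqn (x0 - x) + K%:R * (eta ^+ 2 * L ^+ 2).
Proof.
move=> Xx; elim: K => [|K IH].
  by rewrite big_ord0 mulr0 add0r mul0r addr0.
rewrite big_ord_recr /= mulrDr.
have := descent_step K Xx.
rewrite -[K.+1]addn1 natrD mulrDl mul1r.
move: IH.
move: (\sum_(k < K) _) (sqn (xs K - x)) (sqn (xs K.+1 - x)) (sqn (x0 - x)) => S a1 a2 a0.
move: (Theta F C (xs K) (ys K) - Theta F C x (ys K)) => T.
move: (eta ^+ 2 * L ^+ 2) (K%:R : R) => c kk.
move: (sqn (xs (K + 1) - x)) => a3.
nra.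
Qed.
End Desc.

Section Fin.
Variable R : realType.

Lemma avg_in m (X : set 'cV[R]_m) (cvX : convex_set X) N (p : 'I_N.+1 -> 'cV[R]_m) :
  (forall k, X (p k)) -> X ((N.+1)%:R^-1 *: \sum_(k < N.+1) p k).
Proof.
elim: N p => [|N IH] p hp.
  by rewrite big_ord1 invr1 scale1r; exact: hp.
rewrite big_ord_recr /=.
set q := fun k : 'I_N.+1 => p (widen_ord (leqnSn _) k).
have Xa := IH q (fun k => hp _).
set S := \sum_(k < N.+1) q k in Xa *.
set t : R := (N.+1)%:R / (N.+2)%:R.
have n1 : (N.+1)%:R != 0 :> R by rewrite pnatr_eq0.
have n2 : (N.+2)%:R != 0 :> R by rewrite pnatr_eq0.
have t0 : 0 <= t by rewrite divr_ge0.
have t1 : t <= 1 by rewrite ler_pdivrMr ?ltr0n // mul1r ler_nat.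
have H : X (t *: ((N.+1)%:R^-1 *: S) + (1 - t) *: p ord_max).
  by have := cvX _ _ (Itv01 t0 t1) (mem_set Xa) (mem_set (hp ord_max)); rewrite inE.
suff E : (N.+2)%:R^-1 *: (S + p ord_max) = t *: ((N.+1)%:R^-1 *: S) + (1 - t) *: p ord_max.
  by rewrite E.
apply/matrixP => i j; rewrite !mxE /t.
move: (S i j) (p ord_max i j) => s0 s1.
have e : (N.+2)%:R = (N.+1)%:R + 1 :> R by rewrite -addn1 natrD.
rewrite e in n2 *.
move: ((N.+1)%:R : R) n1 n2 => nn n1 n2.
by field; rewrite n1 n2.
Qed.

Lemma upper_gen m n (Th : 'cV[R]_m -> bvec n -> R) N (xs : 'I_N.+1 -> 'cV[R]_m)
  (ys : 'I_N.+1 -> bvec n) xh x c eps :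
  0 <= c -> c <= 3 -> 0 < eps ->
  (forall y, Th xh y <= (N.+1)%:R^-1 * \sum_k Th (xs k) y) ->
  (forall k, maxY Th (xs k) <= c * Th (xs k) (ys k)) ->
  \sum_k (Th (xs k) (ys k) - Th x (ys k)) <= (N.+1)%:R * eps / 3 ->
  maxY Th xh <= c * maxY Th x + eps.
Proof.
move=> c0 c3 e0 hJ hc hS; apply: maxY_le => y.
have s1 : \sum_k Th (xs k) y <= c * \sum_k Th (xs k) (ys k).
  rewrite mulr_sumr; apply: ler_sum => k _.
  exact: le_trans (maxY_ub _ _ _) (hc k).
have s2 : \sum_(k < N.+1) Th x (ys k) <= (N.+1)%:R * maxY Th x.
  have -> : (N.+1)%:R * maxY Th x = \sum_(k < N.+1) maxY Th x.
    by rewrite sumr_const card_ord mulr_natl.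
  by apply: ler_sum => k _; exact: maxY_ub.
rewrite sumrB in hS.
have := hJ y.
move: (\sum_k Th (xs k) y) (\sum_k Th (xs k) (ys k)) (\sum_(k < N.+1) Th x (ys k)) s1 s2 hS
  => A1 A2 A3 s1 s2 hS.
have nn0 : 0 < (N.+1)%:R :> R by rewrite ltr0n.
move: ((N.+1)%:R : R) nn0 s2 hS => nn nn0 s2 hS.
move: (maxY Th x) (Th xh y) s2 => M T s2 hJ'.
have ni0 : 0 < nn^-1 by rewrite invr_gt0.
have nin : nn^-1 * nn = 1 by rewrite mulVf // gt_eqF.
have h1 : A2 <= nn * M + nn * eps / 3 by lra.
have h2 : c * A2 <= c * (nn * M + nn * eps / 3) by rewrite ler_wpM2l.
have h3 : nn^-1 * A1 <= nn^-1 * (c * (nn * M + nn * eps / 3)).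
  by apply: ler_wpM2l; [exact: ltW | exact: le_trans s1 h2].
have E : nn^-1 * (c * (nn * M + nn * eps / 3)) = c * M + c * eps / 3.
  by field; rewrite gt_eqF.
rewrite E in h3.
have : c * eps / 3 <= eps by rewrite ler_pdivrMr // mulrC ler_wpM2l // ltW.
lra.
Qed.
End Fin.

Lemma jensen (R : realType) m r n (F : 'cV[R]_m -> 'cV[R]_r) (C : 'M[R]_(r, n))
  (A : 'M[R]_(r, m)) (b : 'cV[R]_r) (hF : forall x, F x = A *m x + b)
  N (p : 'I_N.+1 -> 'cV[R]_m) y :
  Theta F C ((N.+1)%:R^-1 *: \sum_k p k) y <=
  (N.+1)%:R^-1 * \sum_k Theta F C (p k) y.
Proof.
set ph := _ *: _.
set g := gradT F C A ph y.
have hs : \sum_(k < N.+1) (Theta F C ph y + dotv g (p k - ph)) <=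
          \sum_(k < N.+1) Theta F C (p k) y.
  by apply: ler_sum => k _; exact (first_order C hF ph (p k) y).
rewrite big_split /= -dotv_sumr sumrB !sumr_const !card_ord in hs.
have n0 : (N.+1)%:R != 0 :> R by rewrite pnatr_eq0.
have E : \sum_(i < N.+1) p i - ph *+ N.+1 = 0.
  by rewrite /ph -scaler_nat scalerA mulfV // scale1r subrr.
rewrite E dotv0r addr0 -mulr_natl in hs.
move: hs; move: (\sum_(k < N.+1) Theta F C (p k) y) (Theta F C ph y) => S T hs.
have nn0 : 0 < (N.+1)%:R :> R by rewrite ltr0n.
move: ((N.+1)%:R : R) nn0 n0 hs => nn nn0 n0 hs.
have -> : T = nn^-1 * (nn * T) by rewrite mulrA mulVf // mul1r.
by rewrite ler_wpM2l // invr_ge0 ltW.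
Qed.

Lemma helper1 (R : realType) (Q sk : R) : 0 < Q -> 0 < sk -> 9 * Q ^+ 2 <= sk ^+ 2 -> 3 * Q <= sk.
Proof. move=> *; nra. Qed.

Lemma helper2 (R : realType) (S Q sk eps : R) : 0 < Q -> 0 < sk -> 0 < eps ->
  2 * S <= 2 * eps * Q * sk -> 3 * Q <= sk -> S <= sk ^+ 2 * eps / 3.
Proof.
move=> Q0 s0 e0 h1 h2.
have h : 0 <= eps * sk * (sk - 3 * Q) by rewrite !mulr_ge0 ?subr_ge0 // ltW.
nra.
Qed.

Unset Implicit Arguments. Set Strict Implicit. Set Printing Implicit Defensive.

Theorem mainTheorem10 (R : realType) (m r n : nat)
  (X : set 'cV[R]_m) (F : 'cV[R]_m -> 'cV[R]_r) (C : 'M[R]_(r, n)) (L eps : R)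
  (x0 : 'cV[R]_m) :
  X !=set0 -> convex_set X -> compact X -> 0 < diam X ->
  affine F -> nonzero_cols C -> 0 < L ->
  (forall y : bvec n, forall x1 x2, X x1 -> X x2 ->
     `|Theta F C x1 y - Theta F C x2 y| <= L * enorm (x1 - x2)) ->
  (forall (y : bvec n) x, X x -> enorm (grad (fun z => Theta F C z y) x) <= L) ->
  0 < eps -> X x0 ->
  let K := nb_iter (diam X) L eps in
  let xh := xhat X (Theta F C) K x0 in
  let yh := yhat X (Theta F C) K x0 in
  (obtuse C -> approx_minimax X (Theta F C) (3^-1) eps xh yh) /\
  (orthogonal_cols C -> global_minimax X (Theta F C) eps xh yh).
Proof.
move=> X0 cvX cX D0 [A [b hF]] _ L0 _ hgrad e0 Xx0 K xh yh.
have KQ := @nb_iter_ge R (diam X) L eps e0; rewrite -/K in KQ.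
rewrite /xh /yh /yhat /xhat; clear xh yh.
clearbody K.
set D := diam X in D0 KQ.
set Q := (D ^+ 2 + L ^+ 2) / (2 * eps) in KQ.
have Q0 : 0 < Q.
  rewrite /Q divr_gt0 ?mulr_gt0 //; apply: ltr_wpDl; first exact: sqr_ge0.
  by rewrite exprn_gt0.
have KP : 0 < K%:R :> R by apply: lt_le_trans KQ; rewrite mulr_gt0 // exprn_gt0.
have [N hN] : exists N, K = N.+1.
  by exists K.-1; rewrite prednK // -(ltr0n R).
subst K.
set sk := Num.sqrt (N.+1)%:R.
have sk0 : 0 < sk by rewrite sqrtr_gt0.
have sk2 : sk ^+ 2 = (N.+1)%:R by rewrite sqr_sqrtr // ltW.
set eta := sk^-1.
have eta0 : 0 < eta by rewrite invr_gt0.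
set xs := fun k : nat => iterate X (Theta F C) eta x0 k.
set ys := fun k : nat => DG (Theta F C (xs k)).
have hsum : forall x, X x ->
  \sum_(k < N.+1) (Theta F C (xs k) (ys k) - Theta F C x (ys k)) <= (N.+1)%:R * eps / 3.
  move=> x Xx.
  have hd := descent hF X0 cX cvX Xx0 eta0 hgrad N.+1 Xx.
  have hD : sqn (x0 - x) <= D ^+ 2.
    rewrite -enorm_sq; have := diam_ub D0 Xx0 Xx; have := enorm_ge0 (x0 - x).
    rewrite -/D; nra.
  have s0 := sqn_ge0 (iterate X (Theta F C) eta x0 N.+1 - x).
  move: hd; rewrite -/xs -/ys.
  move: (\sum_(k < N.+1) _) (sqn (x0 - x)) (sqn (xs N.+1 - x)) hD s0 => S a0 a1 hD s0 hd.
  have etask : eta * sk = 1 by rewrite mulVf // gt_eqF.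
  have Keta : (N.+1)%:R * eta ^+ 2 = 1 by rewrite -sk2 -exprMn (mulrC sk) etask expr1n.
  have W : 2 * eta * S <= D ^+ 2 + L ^+ 2.
    have : (N.+1)%:R * (eta ^+ 2 * L ^+ 2) = L ^+ 2 by rewrite mulrA Keta mul1r.
    lra.
  have W2 : 2 * S <= (D ^+ 2 + L ^+ 2) * sk.
    have h := ler_wpM2r (ltW sk0) W.
    have E : 2 * eta * S * sk = 2 * S * (eta * sk) by ring.
    by rewrite E etask mulr1 in h.
  have Qe : D ^+ 2 + L ^+ 2 = 2 * eps * Q by rewrite /Q mulrC divfK // mulf_neq0 // gt_eqF.
  have skQ : 3 * Q <= sk.
    by rewrite -sk2 in KQ; apply: helper1.
  by rewrite -sk2; rewrite Qe in W2; apply: helper2 W2 skQ.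
have Xxs : forall k, X (xs k) by move=> k; exact: (iter_in F C eta X0 cX Xx0 k).
set xh := (N.+1%:R^-1 *: \sum_(k < N.+1) iterate X (Theta F C) eta x0 k).
have Xxh : X xh := avg_in cvX (fun k : 'I_N.+1 => Xxs k).
have up : forall c, 0 <= c -> c <= 3 ->
    (forall k, maxY (Theta F C) (xs k) <= c * Theta F C (xs k) (ys k)) ->
    forall x, X x -> maxY (Theta F C) xh <= c * maxY (Theta F C) x + eps.
  move=> c c0 c3 hc x Xx.
  apply: (@upper_gen R m n (Theta F C) N (fun k : 'I_N.+1 => xs k)
     (fun k : 'I_N.+1 => ys k) xh x c eps c0 c3 e0 _ _ (hsum x Xx)).
  - by move=> y; exact: (jensen C hF (fun k : 'I_N.+1 => xs k) y).
  - by move=> k; exact: hc.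
split => hC.
- have sm : forall x, submod (Theta F C x) := fun x => submod_obtuse F x hC.
  have hc3 : forall x, maxY (Theta F C) x <= 3 * Theta F C x (DG (Theta F C x)).
    move=> x; apply: maxY_le => y; exact: (DG_third (Theta_ge0 F C x) (sm x) y).
  split; first exact: Xxh.
  split.
  + have := hc3 xh; move: (maxY _ _) (Theta _ _ _ _) => M T; lra.
  + have h1 := maxY_ub (Theta F C) xh (DG (Theta F C xh)).
    have h2 : (maxY (Theta F C) xh - eps) / 3 <= minmax X (Theta F C).
      apply: (@minmax_ge R m n X (Theta F C) _ X0) => x Xx.
      have := up 3 (ler0n _ 3) (lexx _) (fun k => hc3 (xs k)) x Xx.
      move: (maxY _ xh) (maxY _ x) => M1 M2; lra.
    rewrite invrK; move: h1 h2; move: (maxY _ xh) (minmax _ _) (Theta _ _ _ _) => M1 M2 T.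
    lra.
- have ob : obtuse C by move=> i j ij; rewrite hC.
  have hc1 : forall x, maxY (Theta F C) x <= 1 * Theta F C x (DG (Theta F C x)).
    move=> x; apply: maxY_le => y; rewrite mul1r.
    exact: (DG_exact (submod_obtuse F x ob) (submod_orth F x hC) y).
  split; first exact: Xxh.
  split.
  + by rewrite mul1r; have := hc1 xh; rewrite mul1r.
  + have h1 := maxY_ub (Theta F C) xh (DG (Theta F C xh)).
    have h2 : maxY (Theta F C) xh - eps <= minmax X (Theta F C).
      apply: (@minmax_ge R m n X (Theta F C) _ X0) => x Xx.
      have := up 1 ler01 (ler1n _ 3) (fun k => hc1 (xs k)) x Xx.
      move: (maxY _ xh) (maxY _ x) => M1 M2; lra.
    rewrite invr1 mul1r; move: h1 h2; move: (maxY _ xh) (minmax _ _) (Theta _ _ _ _) => M1 M2 T.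
    lra.
Qed.
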